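(* Let $\Theta=\{\sigma_1,\dots,\sigma_q\}$ be a regular set of pairwise commuting Pauli operators on $k$ (memory) qubits, $\sigma_j=\nu_j\sigma_{X,j}\sigma_{Z,j}$, with characteristic numbers $\eta_j$. Add ancilla qubits $(0,j)$ and $(1,j)$, $j=1,\dots,q$, with Pauli operators $X_{\alpha,j},Y_{\alpha,j},Z_{\alpha,j}$. For any memory state $|\psi\rangle$ let $|\Psi_i\rangle=|\psi\rangle\otimes\bigotimes_j|+\rangle_{0,j}\otimes\bigotimes_j|y+\rangle_{1,j}$ (with $X|+\rangle=|+\rangle$, $Y|y+\rangle=|y+\rangle$). For outcomes $\mu_{X,j},\mu_{Z,j},\mu_{0,j},\mu_{1,j}\in\{\pm1\}$ define $$|\Psi_f\rangle=\Big(\prod_j\sigma_{Z,j}^{c_j}\Big)\Big(\prod_j\tfrac{1+\mu_{1,j}Y_{1,j}}2\Big)\Big(\prod_j\tfrac{1+\mu_{0,j}X_{0,j}}2\Big)\Big(\prod_j\tfrac{1+\mu_{Z,j}\sigma_{Z,j}Z_{0,j}^{1-\eta_j}X_{1,j}^{\eta_j}}2\Big)\Big(\prod_j\tfrac{1+\mu_{X,j}\sigma_{X,j}Z_{0,j}^{1-\eta_j}Z_{1,j}^{\eta_j}}2\Big)|\Psi_i\rangle,$$ where $c_j=1$ if ($\eta_j=0$ and $\mu_{0,j}=-1$) or ($\eta_j=1$ and $\mu_{1,j}=-1$), and $c_j=0$ otherwise. Then $$|\Psi_f\rangle=\Big(\prod_{j=1}^q\tfrac{1+(-i)^{\eta_j}\nu_j\mu_{X,j}\mu_{Z,j}\sigma_j}{2}\Big)|\psi\rangle\otimes|\phi\rangle$$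 for some ancilla state $|\phi\rangle$ whose norm $\langle\phi|\phi\rangle$ does not depend on the outcomes $\mu_{X,j},\mu_{Z,j}$. (That is, the protocol realises the simultaneous measurement of $\Theta$ with outcome $(-i)^{\eta_j}\nu_j\mu_{X,j}\mu_{Z,j}$ for $\sigma_j$.)
   Context: Every Pauli operator $\sigma$ (with phase) on a set of qubits can be written uniquely as $\sigma=\nu\sigma_X\sigma_Z$ with $\nu\in\{\pm1,\pm i\}$, $\sigma_X$ a tensor product of Pauli $X$ and identity factors, and $\sigma_Z$ a tensor product of Pauli $Z$ and identity factors; here the operators $\sigma_j$ are Hermitian. The characteristic number $\eta_j$ of $\sigma_j$ is $0$ if $\sigma_{X,j}$ and $\sigma_{Z,j}$ commute and $1$ if they anticommute (so $\nu_j=\pm1$ when $\eta_j=0$ and $\nu_j=\pm i$ when $\eta_j=1$). A set $\{\sigma_1,\dots,\sigma_q\}$ is regular if $\sigma_{X,i}$ commutes with $\sigma_{Z,j}$ for all $i\neq j$. Memory operators act on the memory factor only; ancilla operators act on the indicated ancilla qubit only. *)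

(* Defs.v *)
(* Qubit registers are modelled concretely: for a finite
   type I of qubit labels, a computational-basis configuration is a
   {ffun I -> bool} and a (not necessarily normalised) state is a
   {ffun conf I -> C}, C an arbitrary numeric algebraically closed field
   (e.g. algC). *)
From HB Require Import structures.
From mathcomp Require Import all_boot all_order all_algebra.
Set Implicit Arguments. Unset Strict Implicit. Unset Printing Implicit Defensive.
Import Order.TTheory GRing.Theory Num.Theory.
Local Open Scope ring_scope.

Notation conf I := {ffun I -> bool}.
Notation st C I := {ffun conf I -> C}.
Notation op C I := (st C I -> st C I).

Section Paulis.
Variables (C : numClosedFieldType) (I : finType).

(* measurement outcome encoded as a bool: false ~ +1, true ~ -1 *)
Definition sgnb (b : bool) : C := if b then -1 else 1.

Definition xorv (x a : conf I) : conf I := [ffun i => addb (x i) (a i)].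
Definition delta (i : I) : conf I := [ffun l => l == i].

(* tensor products of Pauli X factors (X on the qubits where a is true)
   and of Pauli Z factors (Z on the qubits where b is true) *)
Definition PX (a : conf I) : op C I := fun s => [ffun x : conf I => s (xorv x a)].
Definition PZ (b : conf I) : op C I :=
  fun s => [ffun x : conf I => (-1) ^+ #|[pred i | b i && x i]| * s x].

Definition Xq (i : I) : op C I := PX (delta i).
Definition Zq (i : I) : op C I := PZ (delta i).
Definition Yq (i : I) : op C I := fun s => [ffun x => 'i * Xq i (Zq i s) x].

Definition opow (P : op C I) (e : bool) : op C I := if e then P else id.

Definition projc (c : C) (P : op C I) : op C I :=
  fun s => [ffun x => (s x + c * P s x) / 2].

Definition dot (s t : st C I) : C := \sum_x (s x)^* * t x.
Definition norm2 (s : st C I) : C := dot s s.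

Definition herm_op (A : op C I) := forall s t, dot s (A t) = dot (A s) t.
Definition opcomm (A B : op C I) := forall s, A (B s) = B (A s).
End Paulis.

Definition oprod (C : numClosedFieldType) (I J : finType) (F : J -> op C I) : op C I :=
  foldr (fun j acc => F j \o acc) id (enum J).

(* Full register: memory qubits inl i (i : 'I_k), ancilla qubits
   inr (alpha, j) with alpha = false for ancilla (0,j), true for (1,j). *)
Definition fullI (k q : nat) := ('I_k + (bool * 'I_q))%type.

Definition tensor (C : numClosedFieldType) (k q : nat)
  (psi : st C 'I_k) (phi : st C (bool * 'I_q)) : st C (fullI k q) :=
  [ffun x : conf (fullI k q) => psi [ffun i => x (inl i)] * phi [ffun p => x (inr p)]].

Definition memv (k q : nat) (a : conf 'I_k) : conf (fullI k q) :=
  [ffun l => match l with inl i => a i | inr _ => false end].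

Definition anc (k q : nat) (alpha : bool) (j : 'I_q) : fullI k q := inr (alpha, j).

Definition sigma (C : numClosedFieldType) (k q : nat)
  (a b : 'I_q -> conf 'I_k) (nu : 'I_q -> C) (j : 'I_q) : op C 'I_k :=
  fun s => [ffun x => nu j * PX (a j) (PZ (b j) s) x].

(* bigotimes_j |+>_{0,j} (x) bigotimes_j |y+>_{1,j},
   |+> = (|0>+|1>)/sqrt 2, |y+> = (|0> + i|1>)/sqrt 2 *)
Definition anc_init (C : numClosedFieldType) (q : nat) : st C (bool * 'I_q) :=
  [ffun y : conf (bool * 'I_q) => \prod_(j : 'I_q)
      ((sqrtC (2 : C))^-1 * ((sqrtC (2 : C))^-1 * (if y (true, j) then 'i else 1)))].

Definition Psi_i (C : numClosedFieldType) (k q : nat) (psi : st C 'I_k) : st C (fullI k q) :=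
  tensor psi (anc_init C q).

Definition Psi_f (C : numClosedFieldType) (k q : nat)
  (a b : 'I_q -> conf 'I_k) (eta : 'I_q -> bool)
  (muX muZ mu0 mu1 : {ffun 'I_q -> bool}) (psi : st C 'I_k) : st C (fullI k q) :=
  let SX j : op C (fullI k q) := PX (memv q (a j)) in
  let SZ j : op C (fullI k q) := PZ (memv q (b j)) in
  let c j := if eta j then mu1 j else mu0 j in
  (oprod (fun j => opow (SZ j) (c j))
   \o oprod (fun j => projc (sgnb C (mu1 j)) (Yq (C := C) (anc k true j)))
   \o oprod (fun j => projc (sgnb C (mu0 j)) (Xq (C := C) (anc k false j)))
   \o oprod (fun j => projc (sgnb C (muZ j))
         (SZ j \o opow (Zq (C := C) (anc k false j)) (~~ eta j)
               \o opow (Xq (C := C) (anc k true j)) (eta j)))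
   \o oprod (fun j => projc (sgnb C (muX j))
         (SX j \o opow (Zq (C := C) (anc k false j)) (~~ eta j)
               \o opow (Zq (C := C) (anc k true j)) (eta j))))
  (Psi_i q psi).

Definition meas (C : numClosedFieldType) (k q : nat)
  (a b : 'I_q -> conf 'I_k) (nu : 'I_q -> C) (eta : 'I_q -> bool)
  (muX muZ : {ffun 'I_q -> bool}) : op C 'I_k :=
  oprod (fun j => projc ((- 'i) ^+ eta j * nu j * sgnb C (muX j) * sgnb C (muZ j))
                        (sigma a b nu j)).

(* Main.v *)
Require Import Defs.
From HB Require Import structures.
From mathcomp Require Import all_boot all_order all_algebra.
From mathcomp Require Import ring.
Set Implicit Arguments. Unset Strict Implicit. Unset Printing Implicit Defensive.
Import Order.TTheory GRing.Theory Num.Theory.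
Local Open Scope ring_scope.

Section Basic.
Variables (C : numClosedFieldType) (I : finType).

Definition sg (v x : conf I) : C := \prod_l (if v l && x l then -1 else 1).

Lemma sgn_card (P : pred I) : (-1) ^+ #|[pred i | P i]| = \prod_i (if P i then -1 else 1 : C).
Proof. by rewrite -big_mkcond /= prodr_const. Qed.

Lemma PZE (b : conf I) (s : st C I) x : PZ b s x = sg b x * s x.
Proof. by rewrite /PZ ffunE sgn_card. Qed.

Lemma PXE (a : conf I) (s : st C I) x : PX a s x = s (xorv x a).
Proof. by rewrite /PX ffunE. Qed.

Lemma xorvK (x a : conf I) : xorv (xorv x a) a = x.
Proof. by apply/ffunP=> i; rewrite !ffunE addbK. Qed.

Lemma xorvAC (x a a' : conf I) : xorv (xorv x a) a' = xorv (xorv x a') a.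
Proof. by apply/ffunP=> i; rewrite !ffunE -!addbA [addb (a i) _]addbC. Qed.

Lemma sg_xor (v x u : conf I) : sg v (xorv x u) = sg v x * sg v u.
Proof.
rewrite /sg -big_split /=; apply: eq_bigr => l _; rewrite ffunE.
by case: (v l); case: (x l); case: (u l); rewrite /= ?mulr1 ?mul1r ?mulrNN ?mulr1.
Qed.

Lemma sg_sq (v x : conf I) : sg v x * sg v x = 1.
Proof.
rewrite /sg -big_split /=; apply: big1 => l _.
by case: (v l && x l); rewrite ?mulrNN mulr1.
Qed.

Lemma sg_pm (v x : conf I) : sg v x = 1 \/ sg v x = -1.
Proof.
rewrite /sg -big_mkcond /= prodr_const -signr_odd.
by case: odd; [right|left].
Qed.

Lemma sg_disj (v u : conf I) : (forall l, ~~ (v l && u l)) -> sg v u = 1.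
Proof. by move=> H; apply: big1 => l _; rewrite (negbTE (H l)). Qed.

Lemma sgC (v u : conf I) : sg v u = sg u v.
Proof. by apply: eq_bigr => l _; rewrite andbC. Qed.

Definition opc (A B : op C I) := forall s, A (B s) = B (A s).

Lemma PXX (u u' : conf I) : opcomm (PX (C:=C) u) (PX u').
Proof. by move=> s; apply/ffunP=> x; rewrite !PXE xorvAC. Qed.

Lemma PZZ (v v' : conf I) : opcomm (PZ (C:=C) v) (PZ v').
Proof. by move=> s; apply/ffunP=> x; rewrite !PZE mulrCA. Qed.

Lemma PXZ (u v : conf I) : sg v u = 1 -> opcomm (PX (C:=C) u) (PZ v).
Proof. by move=> H s; apply/ffunP=> x; rewrite PXE !PZE PXE sg_xor H mulr1. Qed.

Lemma PXZ_inv (u v : conf I) : opcomm (PX (C:=C) u) (PZ v) -> sg v u = 1.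
Proof.
move=> H; have := congr1 (fun f : st C I => f [ffun=> false]) (H [ffun=> 1]).
rewrite /= PXE !PZE PXE !ffunE !mulr1 sg_xor.
have -> : sg v [ffun=> false] = 1 by apply: sg_disj => l; rewrite ffunE andbF.
by rewrite mul1r.
Qed.

Definition lin (O : op C I) := forall (c d : C) (s t : st C I),
  O [ffun x => c * s x + d * t x] = [ffun x => c * O s x + d * O t x].

Lemma linZ (O : op C I) c (s : st C I) : lin O -> O [ffun x => c * s x] = [ffun x => c * O s x].
Proof.
move=> HO; have := HO c 0 s s.
have -> : [ffun x => c * s x + 0 * s x] = [ffun x => c * s x].
  by apply/ffunP=> x; rewrite !ffunE mul0r addr0.
by move=> ->; apply/ffunP=> x; rewrite !ffunE mul0r addr0.
Qed.

Lemma lin_PX (u : conf I) : lin (PX u).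
Proof. by move=> c d s t; apply/ffunP=> x; rewrite !(PXE, ffunE). Qed.
Lemma lin_PZ (v : conf I) : lin (PZ v).
Proof. by move=> c d s t; apply/ffunP=> x; rewrite !(PZE, ffunE); ring. Qed.
Lemma lin_comp (A B : op C I) : lin A -> lin B -> lin (A \o B).
Proof. by move=> HA HB c d s t /=; rewrite HB HA. Qed.
Lemma lin_opow (A : op C I) e : lin A -> lin (opow A e).
Proof. by case: e => //= _ c d s t; apply/ffunP=> x; rewrite !ffunE. Qed.

Lemma projcE (c : C) (P : op C I) (s : st C I) : projc c P s = [ffun x => 2^-1 * s x + (c / 2) * P s x].
Proof. by apply/ffunP=> x; rewrite !ffunE; ring. Qed.

Lemma lin_projc (c : C) (P : op C I) : lin P -> lin (projc c P).
Proof.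
move=> HP c1 d s t; rewrite !projcE HP; apply/ffunP=> x; rewrite !ffunE; ring.
Qed.

Lemma YqE (p : I) (s : st C I) : Yq p s = [ffun x => 'i * PX (delta p) (PZ (delta p) s) x].
Proof. by []. Qed.

Lemma lin_Yq (p : I) : lin (Yq (C:=C) p).
Proof.
move=> c d s t; rewrite !YqE; apply/ffunP=> x.
rewrite !ffunE; ring.
Qed.

Lemma comm_comp (O A B : op C I) : opcomm O A -> opcomm O B -> opcomm O (A \o B).
Proof. by move=> HA HB s /=; rewrite HA HB. Qed.
Lemma comm_opow (O A : op C I) e : opcomm O A -> opcomm O (opow A e).
Proof. by case: e. Qed.
Lemma comm_projc (O : op C I) (c : C) (P : op C I) : lin O -> opcomm O P -> opcomm O (projc c P).
Proof.
move=> HO HP s; rewrite !projcE HO HP; apply/ffunP=> x; rewrite !ffunE //.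
Qed.
Lemma comm_Yq (O : op C I) (p : I) : lin O -> opcomm O (PX (delta p)) -> opcomm O (PZ (delta p)) ->
  opcomm O (Yq (C:=C) p).
Proof.
move=> HO HX HZ s; rewrite !YqE (linZ _ _ HO); apply/ffunP=> x.
by rewrite !ffunE HX HZ PXE /PZ ffunE.
Qed.
End Basic.

Section Fold.
Variables (C : numClosedFieldType) (I J : finType).
Definition foldl_ (l : seq J) (F : J -> op C I) : op C I :=
  foldr (fun j acc => F j \o acc) id l.

Lemma oprodE (F : J -> op C I) : oprod F = foldl_ (enum J) F.
Proof. by []. Qed.

Lemma comm_fold (O : op C I) l F : (forall j, j \in l -> opcomm O (F j)) ->
  forall s, O (foldl_ l F s) = foldl_ l F (O s).
Proof.
elim: l => [//|j l IH] H s /=.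
have H' : forall i, i \in l -> opcomm O (F i).
  by move=> i Hi; apply: H; rewrite in_cons Hi orbT.
by rewrite H ?mem_head // IH.
Qed.

Lemma fold_merge l (A B : J -> op C I) : uniq l ->
  (forall i j, i != j -> opcomm (A i) (B j)) ->
  forall s, foldl_ l A (foldl_ l B s) = foldl_ l (fun j => A j \o B j) s.
Proof.
move=> + H; elim: l => [//|j l IH] /andP [jl ul] s /=.
rewrite -(comm_fold (O := B j)) ?IH // => i il t; rewrite H //.
by apply: contraNneq jl => <-.
Qed.
End Fold.

Section Main.
Variables (C : numClosedFieldType) (k q : nat) (a b : 'I_q -> conf 'I_k) (eta : 'I_q -> bool)
  (muX muZ mu0 mu1 : {ffun 'I_q -> bool}).
Hypothesis Hreg : forall i j, i != j -> sg C (b j) (a i) = 1.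

Local Notation T := (fullI k q).
Definition SXf j : op C T := PX (memv q (a j)).
Definition SZf j : op C T := PZ (memv q (b j)).
Definition cf j := if eta j then mu1 j else mu0 j.
Definition S1 j : op C T := projc (sgnb C (muX j))
         (SXf j \o opow (Zq (C := C) (anc k false j)) (~~ eta j)
               \o opow (Zq (C := C) (anc k true j)) (eta j)).
Definition S2 j : op C T := projc (sgnb C (muZ j))
         (SZf j \o opow (Zq (C := C) (anc k false j)) (~~ eta j)
               \o opow (Xq (C := C) (anc k true j)) (eta j)).
Definition S3 j : op C T := projc (sgnb C (mu0 j)) (Xq (C := C) (anc k false j)).
Definition S4 j : op C T := projc (sgnb C (mu1 j)) (Yq (C := C) (anc k true j)).
Definition S5 j : op C T := opow (SZf j) (cf j).

Lemma Psi_fE psi : Psi_f a b eta muX muZ mu0 mu1 psi =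
  oprod S5 (oprod S4 (oprod S3 (oprod S2 (oprod S1 (Psi_i q psi))))).
Proof. by []. Qed.

Definition xs j : seq (conf T) := [:: memv q (a j); delta (anc k false j); delta (anc k true j)].
Definition zs j : seq (conf T) := [:: memv q (b j); delta (anc k false j); delta (anc k true j)].

Lemma sg_memv (v u : conf 'I_k) : sg C (memv q v) (memv q u) = sg C v u.
Proof.
rewrite /sg big_sumType /=.
rewrite [X in _ * X]big1 ?mulr1; last by move=> p _; rewrite !ffunE.
by apply: eq_bigr => i _; rewrite !ffunE.
Qed.

Lemma atoms_sg i j u v : i != j -> u \in xs i -> v \in zs j -> sg C v u = 1.
Proof.
move=> ij; rewrite !inE => /or3P [] /eqP -> /or3P [] /eqP ->;
  try (by rewrite sg_memv Hreg);
  apply: sg_disj => l; rewrite !ffunE; case: l => // [[al jl]] //=;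
  rewrite /anc ?andbF //; apply/negP => /andP [/eqP [_ E1] /eqP [_ E2]];
  by move: ij; rewrite -E1 -E2 eqxx.
Qed.

Definition allS (P : op C T -> Prop) j := [/\ P (S1 j), P (S2 j), P (S3 j), P (S4 j) & P (S5 j)].

Lemma build (O : op C T) j : lin O -> (forall u, u \in xs j -> opcomm O (PX u)) ->
  (forall v, v \in zs j -> opcomm O (PZ v)) -> allS (opcomm O) j.
Proof.
move=> HO HX HZ.
have X1 : opcomm O (SXf j) by apply: HX; rewrite !inE eqxx.
have Z1 : opcomm O (SZf j) by apply: HZ; rewrite !inE eqxx.
have Z0 : opcomm O (Zq (anc k false j)) by apply: HZ; rewrite !inE eqxx ?orbT.
have Z2 : opcomm O (Zq (anc k true j)) by apply: HZ; rewrite !inE eqxx ?orbT.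
have X0 : opcomm O (Xq (anc k false j)) by apply: HX; rewrite !inE eqxx ?orbT.
have X2 : opcomm O (Xq (anc k true j)) by apply: HX; rewrite !inE eqxx ?orbT.
split.
- by apply: comm_projc => //; do 2!apply: comm_comp => //; apply: comm_opow.
- by apply: comm_projc => //; do 2!apply: comm_comp => //; apply: comm_opow.
- by apply: comm_projc.
- by apply: comm_projc => //; apply: comm_Yq.
- by apply: comm_opow.
Qed.

Lemma linS j : allS (@lin C T) j.
Proof.
split.
- apply: lin_projc; apply: lin_comp; [apply: lin_comp; [exact: lin_PX | apply: lin_opow; exact: lin_PZ] | apply: lin_opow; exact: lin_PZ].
- apply: lin_projc; apply: lin_comp; [apply: lin_comp; [exact: lin_PZ | apply: lin_opow; exact: lin_PZ] | apply: lin_opow; exact: lin_PX].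
- apply: lin_projc; exact: lin_PX.
- apply: lin_projc; exact: lin_Yq.
- apply: lin_opow; exact: lin_PZ.
Qed.

Lemma flip (A B : op C T) : opcomm A B -> opcomm B A.
Proof. by move=> H s; rewrite H. Qed.

Lemma S_comm i j : i != j -> allS (fun A => allS (opcomm A) j) i.
Proof.
move=> ij.
have ji : j != i by rewrite eq_sym.
have XA u : u \in xs j -> allS (opcomm (PX u)) i.
  move=> uj; apply: build; [exact: lin_PX | by move=> u' _; exact: PXX |].
  by move=> v' vi; apply: PXZ; exact: atoms_sg ji uj vi.
have ZA v : v \in zs j -> allS (opcomm (PZ v)) i.
  move=> vj; apply: build; [exact: lin_PZ | | by move=> v' _; exact: PZZ].
  by move=> u' ui; apply: flip; apply: PXZ; exact: atoms_sg ij ui vj.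
have [L1 L2 L3 L4 L5] := linS i.
split; apply: build => // [u uj|v vj];
  first [case: (XA u uj) | case: (ZA v vj)] => H1 H2 H3 H4 H5; apply: flip; assumption.
Qed.

Definition G j : op C T := S5 j \o (S4 j \o (S3 j \o (S2 j \o S1 j))).

Lemma Psi_fG psi : Psi_f a b eta muX muZ mu0 mu1 psi = foldl_ (enum 'I_q) G (Psi_i q psi).
Proof.
rewrite Psi_fE !oprodE.
have U := enum_uniq 'I_q.
rewrite (fold_merge U (A := S2) (B := S1)); last first.
  by move=> i j ij; have [_ [H _ _ _ _] _ _ _] := S_comm ij.
rewrite (fold_merge U (A := S3)); last first.
  by move=> i j ij; have [_ _ [H1 H2 _ _ _] _ _] := S_comm ij; apply: comm_comp.
rewrite (fold_merge U (A := S4)); last first.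
  by move=> i j ij; have [_ _ _ [H1 H2 H3 _ _] _] := S_comm ij; do ! apply: comm_comp.
rewrite (fold_merge U (A := S5)) //.
by move=> i j ij; have [_ _ _ _ [H1 H2 H3 H4 _]] := S_comm ij; do ! apply: comm_comp.
Qed.

Implicit Types (t : 'I_q -> bool -> bool -> C) (w : bool -> bool -> st C 'I_k) (x : conf T) (u v : conf 'I_k) (O : op C T).

Definition memp (x : conf T) : conf 'I_k := [ffun i => x (inl i)].
Definition Qst (t : 'I_q -> bool -> bool -> C) j (w : bool -> bool -> st C 'I_k) : st C T :=
  [ffun x : conf T => (\prod_(j' | j' != j) t j' (x (anc k false j')) (x (anc k true j')))
             * w (x (anc k false j)) (x (anc k true j)) (memp x)].
Definition Pst (t : 'I_q -> bool -> bool -> C) (v : st C 'I_k) : st C T :=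
  [ffun x : conf T => (\prod_j' t j' (x (anc k false j')) (x (anc k true j'))) * v (memp x)].

Lemma Q_ext t j w (w' : bool -> bool -> st C 'I_k) : (forall b0 b1 m, w b0 b1 m = w' b0 b1 m) -> Qst t j w = Qst t j w'.
Proof. by move=> H; apply/ffunP=> x; rewrite !ffunE H. Qed.

Lemma xorv_memv_inr (x : conf T) u p : xorv x (memv q u) (inr p) = x (inr p).
Proof. by rewrite !ffunE addbF. Qed.

Lemma memp_xorv_memv (x : conf T) u : memp (xorv x (memv q u)) = xorv (memp x) u.
Proof. by apply/ffunP=> i; rewrite !ffunE. Qed.

Lemma memp_xorv_delta (x : conf T) p : memp (xorv x (delta (inr p))) = memp x.
Proof. by apply/ffunP=> i; rewrite !ffunE addbF. Qed.

Lemma Q_PXm t j w u : PX (memv q u) (Qst t j w) = Qst t j (fun b0 b1 => PX u (w b0 b1)).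
Proof.
apply/ffunP=> x; rewrite PXE !ffunE /anc /= !addbF memp_xorv_memv.
congr (_ * _); apply: eq_bigr => i _; by rewrite !xorv_memv_inr.
Qed.

Lemma sg_memv_x (v : conf 'I_k) (x : conf T) : sg C (memv q v) x = sg C v (memp x).
Proof.
rewrite /sg big_sumType /=.
rewrite [X in _ * X]big1 ?mulr1; last by move=> p _; rewrite !ffunE.
by apply: eq_bigr => i _; rewrite !ffunE.
Qed.

Lemma Q_PZm t j w v : PZ (memv q v) (Qst t j w) = Qst t j (fun b0 b1 => PZ v (w b0 b1)).
Proof.
apply/ffunP=> x; rewrite PZE sg_memv_x [in RHS]ffunE PZE ffunE; ring.
Qed.

Lemma sg_delta (p : T) (x : conf T) : sg C (delta p) x = sgnb C (x p).
Proof.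
rewrite /sg (bigD1 p) //= big1 ?mulr1; first by rewrite ffunE eqxx.
by move=> l /negbTE lp; rewrite ffunE lp.
Qed.

Lemma Q_Z t j w (al : bool) : Zq (anc k al j) (Qst t j w) =
  Qst t j (fun b0 b1 => [ffun m => sgnb C (if al then b1 else b0) * w b0 b1 m]).
Proof.
apply/ffunP=> x; rewrite /Zq PZE sg_delta !ffunE; case: al; ring.
Qed.

Lemma Q_X t j w (al : bool) : Xq (anc k al j) (Qst t j w) =
  Qst t j (fun b0 b1 => w (if al then b0 else ~~ b0) (if al then ~~ b1 else b1)).
Proof.
apply/ffunP=> x; rewrite /Xq PXE !ffunE /anc memp_xorv_delta ?ffunE.
congr (_ * _).
  apply: eq_bigr => i ij; rewrite !ffunE.
  have -> : (inr (false, i) == inr (al, j) :> T) = false.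
    by apply/negbTE; apply: contra ij => /eqP [_ ->].
  have -> : (inr (true, i) == inr (al, j) :> T) = false.
    by apply/negbTE; apply: contra ij => /eqP [_ ->].
  by rewrite !addbF.
by case: al; rewrite !eqxx /= ?addbT ?addbF.
Qed.

Lemma Q_proj t j w (w' : bool -> bool -> st C 'I_k) (c : C) (O : op C T) : O (Qst t j w) = Qst t j w' ->
  projc c O (Qst t j w) = Qst t j (fun b0 b1 => [ffun m => (w b0 b1 m + c * w' b0 b1 m) / 2]).
Proof. by move=> H; apply/ffunP=> x; rewrite ffunE H !ffunE; ring. Qed.

Lemma Q_Y t j w : Yq (anc k true j) (Qst t j w) =
  Qst t j (fun b0 b1 => [ffun m => 'i * (sgnb C (~~ b1) * w b0 (~~ b1) m)]).
Proof.
apply/ffunP=> x; rewrite /Yq ffunE Q_Z Q_X !ffunE; ring.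
Qed.

Definition upd t j (ta : bool -> bool -> C) : 'I_q -> bool -> bool -> C :=
  fun j' => if j' == j then ta else t j'.

Lemma P_Q t j (ps : st C 'I_k) : Pst t ps = Qst t j (fun b0 b1 => [ffun m => t j b0 b1 * ps m]).
Proof. by apply/ffunP=> x; rewrite !ffunE (bigD1 j) //=; ring. Qed.

Lemma Q_P t j (ta : bool -> bool -> C) (ps : st C 'I_k) :
  Qst t j (fun b0 b1 => [ffun m => ta b0 b1 * ps m]) = Pst (upd t j ta) ps.
Proof.
apply/ffunP=> x; rewrite !ffunE [in RHS](bigD1 j) //= /upd eqxx.
rewrite [X in _ = _ * X * _](eq_bigr (fun j' => t j' (x (anc k false j')) (x (anc k true j')))); first by ring.
by move=> i /negbTE ->.
Qed.

Lemma in1 t j w :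
  (SXf j \o opow (Zq (C := C) (anc k false j)) (~~ eta j) \o opow (Zq (C := C) (anc k true j)) (eta j))
    (Qst t j w) = Qst t j (fun b0 b1 => PX (a j) [ffun m => sgnb C (if eta j then b1 else b0) * w b0 b1 m]).
Proof. by case: (eta j) => /=; rewrite Q_Z /SXf Q_PXm. Qed.

Lemma in2 t j w :
  (SZf j \o opow (Zq (C := C) (anc k false j)) (~~ eta j) \o opow (Xq (C := C) (anc k true j)) (eta j))
    (Qst t j w) = Qst t j (fun b0 b1 => PZ (b j)
       (if eta j then w b0 (~~ b1) else [ffun m => sgnb C b0 * w b0 b1 m])).
Proof. by case: (eta j) => /=; rewrite ?Q_Z ?Q_X /SZf Q_PZm. Qed.

Variable nu : 'I_q -> C.
Hypothesis Hpar : forall j, sg C (b j) (a j) = sgnb C (eta j).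
Hypothesis Hnu2 : forall j, nu j * nu j = sgnb C (eta j).

Definition rr : C := (sqrtC (2 : C))^-1.
Definition init (b0 b1 : bool) : C := rr * (rr * (if b1 then 'i else 1)).
Definition eps j : C := if eta j then (if mu1 j then 'i * sgnb C (muZ j) else 1)
                        else (if mu0 j then sgnb C (muZ j) else 1).
Definition kap j (b0 b1 : bool) : C :=
  if eta j then (if mu0 j then 0 else rr) * (rr * 4 / 2 / 2 / 2) * (if b1 then 'i * sgnb C (mu1 j) else 1)
  else (if b0 then sgnb C (mu0 j) else 1) * (rr * 4 / 2 / 2 / 2) * (if mu1 j then 0 else rr * (if b1 then 'i else 1)).
Definition tau j (b0 b1 : bool) : C := eps j * kap j b0 b1.
Definition coef j : C := (- 'i) ^+ eta j * nu j * sgnb C (muX j) * sgnb C (muZ j).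
Definition Mj j : op C 'I_k := projc (coef j) (sigma a b nu j).

Lemma sgnb_sq (x : bool) : sgnb C x * sgnb C x = 1.
Proof. by case: x; rewrite /sgnb ?mulrNN mulr1. Qed.

Lemma sgnbT : sgnb C true = -1. Proof. by []. Qed.
Lemma sgnbF : sgnb C false = 1. Proof. by []. Qed.

Lemma G_Q t j (ps : st C 'I_k) : (forall b0 b1, t j b0 b1 = init b0 b1) ->
  G j (Pst t ps) = Pst (upd t j (tau j)) (Mj j ps).
Proof.
move=> Ht.
rewrite /G /= (P_Q t j) /S1 (Q_proj _ (in1 _ _ _)) /S2 (Q_proj _ (in2 _ _ _)).
rewrite /S3 (Q_proj _ (Q_X _ _ _ _)) /S4 (Q_proj _ (Q_Y _ _ _)) /S5.
rewrite -Q_P.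
have Hcf : forall w, opow (SZf j) (cf j) (Qst t j w) =
   Qst t j (fun b0 b1 => if cf j then PZ (b j) (w b0 b1) else w b0 b1).
  by move=> w; rewrite /cf; case: (if eta j then _ else _) => //=; rewrite /SZf Q_PZm.
rewrite Hcf; apply: Q_ext => b0 b1 m.
have E1 := sgnb_sq (muX j); have E2 := sgnb_sq (muZ j); have E3 := sg_sq C (b j) m.
have Ei : 'i * 'i = -1 :> C by rewrite mulCii.
have Hn := Hnu2 j; have Hp := Hpar j.
rewrite /Mj /sigma /tau /eps /kap /cf /coef.
move: Hn Hp; case: (eta j) => Hn Hp; case: (mu0 j); case: (mu1 j); case: b0; case: b1;
  rewrite /= /coef ?expr0 ?expr1 !(PXE, PZE, ffunE) !Ht /init ?sg_xor ?xorvK ?Hp ?sgnbT ?sgnbF;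
  rewrite ?sgnbT ?sgnbF in Hn;
  ring: E1 E2 E3 Ei Hn.
Qed.

Lemma Pst_ext t t' (ps : st C 'I_k) : (forall j b0 b1, t j b0 b1 = t' j b0 b1) -> Pst t ps = Pst t' ps.
Proof. by move=> H; apply/ffunP=> x; rewrite !ffunE; congr (_ * _); apply: eq_bigr => i _. Qed.

Lemma fold_G l t (ps : st C 'I_k) : uniq l ->
  (forall j, j \in l -> forall b0 b1, t j b0 b1 = init b0 b1) ->
  foldl_ l G (Pst t ps) = Pst (fun j' => if j' \in l then tau j' else t j') (foldl_ l Mj ps).
Proof.
elim: l => [|j l IH] /=; first by move=> _ _; apply: Pst_ext.
move=> /andP [jl ul] Ht.
rewrite IH //; last by move=> i il; apply: Ht; rewrite in_cons il orbT.
rewrite G_Q; last by move=> b0 b1; rewrite (negbTE jl); apply: Ht; rewrite mem_head.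
apply: Pst_ext => i b0 b1; rewrite /upd in_cons.
by case: eqP => [->|].
Qed.

Lemma Psi_f_final psi : Psi_f a b eta muX muZ mu0 mu1 psi =
  Pst tau (meas a b nu eta muX muZ psi).
Proof.
rewrite Psi_fG.
have -> : Psi_i q psi = Pst (fun _ => init) psi.
  apply/ffunP=> x; rewrite !ffunE mulrC; congr (_ * _); apply: eq_bigr => i _.
  by rewrite !ffunE.
rewrite fold_G ?enum_uniq //.
by apply: Pst_ext => i b0 b1; rewrite mem_enum.
Qed.
End Main.

Lemma dot_er (C : numClosedFieldType) (I : finType) (u : st C I) (y : conf I) :
  dot u [ffun x => (x == y)%:R] = (u y)^*.
Proof.
rewrite /dot (bigD1 y) //= big1 ?addr0 => [|x xy]; rewrite ffunE.
  by rewrite eqxx mulr1.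
by rewrite (negbTE xy) mulr0.
Qed.

Lemma dot_el (C : numClosedFieldType) (I : finType) (u : st C I) (y : conf I) :
  dot [ffun x => (x == y)%:R] u = u y.
Proof.
rewrite /dot (bigD1 y) //= big1 ?addr0 => [|x xy]; rewrite ffunE.
  by rewrite eqxx rmorph1 mul1r.
by rewrite (negbTE xy) rmorph0 mul0r.
Qed.

Lemma conj_sgnb (C : numClosedFieldType) e : (sgnb C e)^* = sgnb C e.
Proof. by case: e; rewrite /sgnb ?rmorphN rmorph1. Qed.

Lemma par_of (C : numClosedFieldType) (k : nat) (a b : conf 'I_k) (e : bool) :
  (e = false <-> opcomm (PX (C := C) a) (PZ b)) -> sg C b a = sgnb C e.
Proof.
move=> [H1 H2]; case: e H1 H2 => H1 H2 /=; last by apply: PXZ_inv; apply: H1.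
have [E|E] := sg_pm C b a; last by rewrite E.
by have := H2 (PXZ E).
Qed.

Lemma nu2_of (C : numClosedFieldType) (k : nat) (a b : conf 'I_k) (nu : C) (e : bool) :
  nu \in [:: 1; -1; 'i; - 'i] -> sg C b a = sgnb C e ->
  herm_op (fun s => [ffun x => nu * PX a (PZ b s) x]) -> nu * nu = sgnb C e.
Proof.
move=> Hnu Hp Hh.
pose z0 : conf 'I_k := [ffun=> false].
have H := Hh [ffun x => (x == a)%:R] [ffun x => (x == z0)%:R].
rewrite dot_el dot_er !(PXE, PZE, ffunE) in H.
have E1 : xorv a a = z0 by apply/ffunP=> i; rewrite !ffunE addbb.
have E2 : xorv z0 a = a by apply/ffunP=> i; rewrite !ffunE.
have E3 : sg C b z0 = 1 by apply: sg_disj => l; rewrite ffunE andbF.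
rewrite E1 E2 E3 !eqxx Hp !mulr1 in H.
have Hc : nu^* * nu = 1.
  rewrite mulrC -normCK; move: Hnu; rewrite !inE => /or4P [] /eqP ->;
  by rewrite ?normrN ?normr1 ?normCi expr1n.
case: e H {Hp} => H; rewrite /sgnb ?mulrN1 ?mulr1 ?rmorphN in H.
  by rewrite {1}H mulNr Hc.
by rewrite {1}H Hc.
Qed.

Lemma eps_norm (C : numClosedFieldType) q (eta : 'I_q -> bool) muZ mu0 mu1 j :
  `|eps C eta muZ mu0 mu1 j| = 1.
Proof.
rewrite /eps; case: (eta j); case: (mu0 j); case: (mu1 j); case: (muZ j);
  by rewrite /sgnb ?normrM ?normCi ?normrN ?normr1 ?mulr1.
Qed.

Unset Implicit Arguments. Set Strict Implicit. Set Printing Implicit Defensive.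

Theorem lemma8 (C : numClosedFieldType) (k q : nat)
  (a b : 'I_q -> conf 'I_k) (nu : 'I_q -> C) (eta : 'I_q -> bool)
  (Hnu : forall j, nu j \in [:: 1; -1; 'i; - 'i])
  (Hherm : forall j, herm_op (sigma a b nu j))
  (Heta : forall j, eta j = false <-> opcomm (PX (C := C) (a j)) (PZ (b j)))
  (Hcomm : forall i j, opcomm (sigma a b nu i) (sigma a b nu j))
  (Hreg : forall i j, i != j -> opcomm (PX (C := C) (a i)) (PZ (b j)))
  (psi : st C 'I_k) (Hpsi : norm2 psi = 1)
  (mu0 mu1 : {ffun 'I_q -> bool}) :
  exists phi : {ffun 'I_q -> bool} -> {ffun 'I_q -> bool} -> st C (bool * 'I_q),
    (forall muX muZ : {ffun 'I_q -> bool},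
        Psi_f a b eta muX muZ mu0 mu1 psi
        = tensor (meas a b nu eta muX muZ psi) (phi muX muZ))
    /\ (forall muX muZ muX' muZ' : {ffun 'I_q -> bool},
        norm2 (phi muX muZ) = norm2 (phi muX' muZ')).
Proof.
have Hreg' : forall i j, i != j -> sg C (b j) (a i) = 1.
  by move=> i j ij; apply: PXZ_inv; apply: Hreg.
have Hpar : forall j, sg C (b j) (a j) = sgnb C (eta j) by move=> j; apply: par_of.
have Hnu2 : forall j, nu j * nu j = sgnb C (eta j).
  by move=> j; exact: (nu2_of (Hnu j) (Hpar j) (Hherm j)).
exists (fun muX muZ => [ffun y : conf (bool * 'I_q) =>
   \prod_j tau C eta muZ mu0 mu1 j (y (false, j)) (y (true, j))]).
split.
  move=> muX muZ; rewrite (Psi_f_final muX muZ mu0 mu1 Hreg' Hpar Hnu2).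
  apply/ffunP=> x; rewrite !ffunE mulrC; congr (_ * _).
  by apply: eq_bigr => j _; rewrite !ffunE.
move=> muX muZ muX' muZ'; rewrite /norm2 /dot; apply: eq_bigr => y _.
rewrite !ffunE mulrC -normCK [RHS]mulrC -normCK !normr_prod; congr (_ ^+ 2).
by apply: eq_bigr => j _; rewrite /tau !normrM !eps_norm.
Qed.
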